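(* Let $\alpha\in(0,1]$, let $J$ be a real symmetric $n\times n$ matrix with $J_{ii}=0$ and $\|J\|_{1\to1}=\max_i\sum_j|J_{ij}|\le1-\alpha$, let $h\in\mathbb{R}^n$, and let $q^n$ be the Ising measure on $\{-1,+1\}^n$ proportional to $\exp(\frac12\sum_{i,j}J_{ij}\sigma_i\sigma_j+\sum_ih_i\sigma_i)$. Then the coupling matrix $A$ of $q^n$ satisfies $\|A\|_{2\to2}\le\|J\|_{1\to1}\le1-\alpha$. Moreover, if $\|h\|_\infty\le\tilde\alpha$ for some $\tilde\alpha\ge0$, then there exist $c_{\alpha,\tilde\alpha},C_{\alpha,\tilde\alpha}>0$ depending only on $\alpha$ and $\tilde\alpha$ such that $q_i(s\mid\overline{\sigma_i})\in(c_{\alpha,\tilde\alpha},1-C_{\alpha,\tilde\alpha})$ for all $s\in\{-1,+1\}$, all $i$, all $n$ and all $\overline{\sigma_i}$.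
   Context: For $\sigma\in\{-1,+1\}^n$, $\overline{\sigma_i}=(\sigma_j)_{j\ne i}$ and $q_i(\cdot\mid\overline{\sigma_i})$ is the conditional law of the $i$-th spin given $\overline{\sigma_i}$ under $q^n$. The coupling matrix $A=(A_{ik})$ is defined by $A_{ii}=0$ and, for $i\ne k$, $A_{ik}=\sup\{d_{TV}(q_i(\cdot\mid\overline{x_i}),q_i(\cdot\mid\overline{z_i})):x,z\in\{-1,+1\}^n,\ \overline{x_k}=\overline{z_k}\}$, where $d_{TV}$ is total variation distance. $\|A\|_{2\to2}$ is the Euclidean operator norm. *)

(* Defs.v *)
From HB Require Import structures.
From mathcomp Require Import all_boot all_order all_algebra.
From mathcomp Require Import all_classical all_reals all_analysis.
Set Implicit Arguments. Unset Strict Implicit. Unset Printing Implicit Defensive.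
Import Order.TTheory GRing.Theory Num.Theory.
Local Open Scope ring_scope.
Local Open Scope classical_set_scope.

Section Ising.
Variable R : realType.
Variable n : nat.

(* spin configurations sigma in {-1,+1}^n, encoded by booleans (true = +1) *)
Definition config := {ffun 'I_n -> bool}.
Definition spin (b : bool) : R := if b then 1 else -1.

Definition ising_weight (J : 'M[R]_n) (h : 'I_n -> R) (x : config) : R :=
  expR (2^-1 * (\sum_i \sum_j J i j * spin (x i) * spin (x j))
        + \sum_i h i * spin (x i)).

Definition ising (J : 'M[R]_n) (h : 'I_n -> R) (x : config) : R :=
  ising_weight J h x / \sum_(y : config) ising_weight J h y.

Definition setspin (x : config) (i : 'I_n) (s : bool) : config :=
  [ffun j => if j == i then s else x j].

Definition cond_law (J : 'M[R]_n) (h : 'I_n -> R) (i : 'I_n) (x : config)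
  (s : bool) : R :=
  ising J h (setspin x i s) / \sum_(t : bool) ising J h (setspin x i t).

Definition dTV (p q : bool -> R) : R := 2^-1 * \sum_(s : bool) `|p s - q s|.

Definition agree_off (k : 'I_n) (x z : config) : bool :=
  [forall j, (j != k) ==> (x j == z j)].

(* the coupling matrix A of q^n (sup over a finite nonempty set of
   nonnegative reals = max starting from 0) *)
Definition coupling_matrix (J : 'M[R]_n) (h : 'I_n -> R) : 'M[R]_n :=
  \matrix_(i, k) if i == k then 0 else
    \big[Num.max/0]_(xz : config * config | agree_off k xz.1 xz.2)
       dTV (cond_law J h i xz.1) (cond_law J h i xz.2).

Definition norm11 (J : 'M[R]_n) : R := \big[Num.max/0]_i \sum_j `|J i j|.

Definition normInf (h : 'I_n -> R) : R := \big[Num.max/0]_i `|h i|.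

Definition l2 (x : 'cV[R]_n) : R := Num.sqrt (\sum_i x i 0 ^+ 2).

Definition opnorm22 (A : 'M[R]_n) : R :=
  sup [set l2 (A *m x) | x in [set x : 'cV[R]_n | l2 x <= 1]].

End Ising.

(* Main.v *)
Require Import Defs.
From HB Require Import structures.
From mathcomp Require Import all_boot all_order all_algebra.
From mathcomp Require Import all_classical all_reals all_analysis.
From mathcomp Require Import ring lra.
Import Order.TTheory GRing.Theory Num.Theory.
Import numFieldNormedType.Exports.
Local Open Scope ring_scope.

Section Aux.
Variable R : realType.
Definition sig (d : R) : R := (1 + (expR d)^-1)^-1.
Lemma dsig (x : R) : is_derive x (1:R) sig (expR x / (1 + expR x)^+2).
Proof.
have e0 := expR_gt0 x.
have h2 : expR x != 0 by rewrite gt_eqF.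
have H2 := @is_deriveV R expR x _ 1 h2 (is_derive_expR x).
have H3 := is_deriveD (is_derive_cst (1:R) x 1) H2.
have h1 : (cst 1 + (fun y => (expR y)^-1)) x != 0 by rewrite /= gt_eqF // addr_gt0 // invr_gt0.
have H4 := is_deriveV h1 H3.
apply: trigger_derive H4 _.
rewrite /GRing.scale /=.
rewrite /= add0r. have h3 : 1 + expR x != 0 by rewrite gt_eqF // addr_gt0.
have -> : (cst 1 + (fun y : R => (expR y)^-1)) x = 1 + (expR x)^-1 by []. field. by rewrite h2 h3.
Qed.

Lemma sig_cont : continuous (sig : R -> R).
Proof.
move=> x; apply: (@differentiable_continuous R R R); apply/derivable1_diffP.
by have [] := dsig x.
Qed.

Lemma sig_lip (a b : R) : `|sig a - sig b| <= `|a - b| / 4.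
Proof.
wlog ab : a b / a <= b.
  move=> W; case: (leP a b) => [/W//|/ltW/W]; by rewrite distrC (distrC a).
rewrite distrC; have [c _ ->] := @MVT_segment R sig (fun x => expR x / (1 + expR x)^+2) a b ab
  (fun x _ => dsig x) (continuous_subspaceT sig_cont).
have e0 := expR_gt0 c.
have d0 : 0 <= expR c / (1 + expR c)^+2 by rewrite divr_ge0 // ?ltW // exprn_ge0 // addr_ge0 // ltW.
have d1 : expR c / (1 + expR c)^+2 <= 4^-1.
  rewrite ler_pdivrMr ?exprn_gt0 ?addr_gt0 //.
  rewrite -subr_ge0; have -> : 4^-1 * (1 + expR c) ^+ 2 - expR c = 4^-1 * (1 - expR c)^+2.
    by field.
  by rewrite mulr_ge0 // ?sqr_ge0.
rewrite normrM (ger0_norm d0) (distrC a) (ger0_norm (x := b - a)) ?subr_ge0 //.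
rewrite mulrC ler_wpM2l // ?subr_ge0 //.
Qed.

Variable n : nat.
Implicit Types (J : 'M[R]_n) (h : 'I_n -> R) (x z : config n).

Definition En J h x : R :=
  2^-1 * (\sum_i \sum_j J i j * spin R (x i) * spin R (x j))
        + \sum_i h i * spin R (x i).

Lemma sum_delta (i : 'I_n) (F : 'I_n -> R) :
  \sum_j (if j == i then F j else 0) = F i.
Proof. by rewrite -big_mkcond big_pred1_eq. Qed.

Lemma setspinE x i s j : setspin x i s j = if j == i then s else x j.
Proof. by rewrite /setspin ffunE. Qed.

Lemma Ediff J h i x : J^T = J -> J i i = 0 ->
  En J h (setspin x i true) - En J h (setspin x i false) =
  2 * (\sum_j J i j * spin R (x j) + h i).
Proof.
move=> HJ Jii.
have Js a b : J a b = J b a by rewrite -{1}HJ mxE.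
set a := fun j => spin R (setspin x i true j).
set b := fun j => spin R (setspin x i false j).
set c := fun j => spin R (x j).
have ac j : j != i -> a j = c j by rewrite /a /c setspinE => /negbTE ->.
have bc j : j != i -> b j = c j by rewrite /b /c setspinE => /negbTE ->.
have ai : a i = 1 by rewrite /a setspinE eqxx.
have bi : b i = -1 by rewrite /b setspinE eqxx.
have P1 j k : J j k * a j * a k - J j k * b j * b k =
   (if j == i then 2 * J i k * c k else 0) + (if k == i then 2 * J i j * c j else 0).
  case: (eqVneq j i) => [->|ji]; case: (eqVneq k i) => [->|ki].
  - by rewrite Jii; ring.
  - by rewrite ai bi (ac _ ki) (bc _ ki) addr0; ring.
  - by rewrite ai bi (ac _ ji) (bc _ ji) add0r Js; ring.
  - by rewrite (ac _ ji) (bc _ ji) (ac _ ki) (bc _ ki) subrr addr0.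
have P2 j : h j * a j - h j * b j = if j == i then 2 * h i else 0.
  case: (eqVneq j i) => [->|ji]; first by rewrite ai bi; ring.
  by rewrite (ac _ ji) (bc _ ji) subrr.
rewrite /En -/a -/b.
set X1 := \sum_i0 \sum_j J i0 j * a i0 * a j.
set X2 := \sum_i0 \sum_j J i0 j * b i0 * b j.
set Y1 := \sum_i0 h i0 * a i0.
set Y2 := \sum_i0 h i0 * b i0.
have -> : 2^-1 * X1 + Y1 - (2^-1 * X2 + Y2) = 2^-1 * (X1 - X2) + (Y1 - Y2) by ring.
rewrite /X1 /X2 /Y1 /Y2 -sumrB.
under eq_bigr => j _ do rewrite -sumrB.
rewrite -sumrB.
under eq_bigr => j _ do under eq_bigr => k _ do rewrite P1.
rewrite (eq_bigr _ (fun j _ => P2 j)).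
rewrite sum_delta.
under eq_bigr => j _ do rewrite big_split /=.
rewrite big_split /=.
under [X in _ * (_ + X)]eq_bigr => j _ do rewrite (sum_delta i (fun _ => 2 * J i j * c j)).
have -> : \sum_j \sum_k (if j == i then 2 * J i k * c k else 0) =
          \sum_j (if j == i then \sum_k 2 * J i k * c k else 0).
  by apply: eq_bigr => j _; case: (j == i) => //; rewrite big1.
rewrite sum_delta.
have -> : \sum_k 2 * J i k * c k = 2 * \sum_k J i k * c k.
  by rewrite mulr_sumr; apply: eq_bigr => k _; rewrite mulrA.
by rewrite /c; field.
Qed.

Lemma weightE J h x : ising_weight J h x = expR (En J h x).
Proof. by []. Qed.

Lemma Z_gt0 J h : 0 < \sum_(y : config n) ising_weight J h y.
Proof.
rewrite (bigD1 [ffun=> true]) //= ltr_pwDl ?expR_gt0 //.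
by apply: sumr_ge0 => y _; rewrite ltW // expR_gt0.
Qed.

Lemma cond_true J h i x :
  cond_law J h i x true = sig (En J h (setspin x i true) - En J h (setspin x i false)).
Proof.
rewrite /cond_law /ising big_bool /= /sig !weightE expRD expRN.
have Z0 := Z_gt0 J h.
set Z := \sum_(y : config n) ising_weight J h y.
set et := expR (En J h (setspin x i true)).
set ef := expR (En J h (setspin x i false)).
have et0 : 0 < et by apply: expR_gt0.
have ef0 : 0 < ef by apply: expR_gt0.
field.
by rewrite !gt_eqF ?addr_gt0.
Qed.

Lemma cond_false J h i x : cond_law J h i x false = 1 - cond_law J h i x true.
Proof.
rewrite /cond_law /ising big_bool /=.
have Z0 := Z_gt0 J h.
set Z := \sum_(y : config n) ising_weight J h y.
have et0 : 0 < ising_weight J h (setspin x i true) by apply: expR_gt0.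
have ef0 : 0 < ising_weight J h (setspin x i false) by apply: expR_gt0.
field.
by rewrite !gt_eqF ?addr_gt0 ?mulr_gt0 ?invr_gt0.
Qed.

Lemma dTV_cond J h i x z :
  dTV (cond_law J h i x) (cond_law J h i z) = `|cond_law J h i x true - cond_law J h i z true|.
Proof.
rewrite /dTV big_bool /= !cond_false.
have -> : 1 - cond_law J h i x true - (1 - cond_law J h i z true) =
  - (cond_law J h i x true - cond_law J h i z true) by ring.
by rewrite normrN; field.
Qed.
Lemma spin_dist (b1 b2 : bool) : `|spin R b1 - spin R b2| <= 2.
Proof. by case: b1; case: b2; rewrite /spin /=; rewrite ?subrr ?normr0 //; [rewrite opprK | rewrite -opprD normrN]; rewrite ger0_norm. Qed.

Lemma A_bound J h i k : J^T = J -> (forall i, J i i = 0) ->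
  0 <= coupling_matrix J h i k <= `|J i k|.
Proof.
move=> HJ Jd.
rewrite mxE; case: (eqVneq i k) => [->|ik]; first by rewrite Jd normr0 lexx.
apply/andP; split; first exact: bigmax_ge_id.
apply: bigmax_le => // -[x z] /= /forallP ag.
rewrite dTV_cond !cond_true !Ediff //.
apply: le_trans (sig_lip _ _) _.
have -> : 2 * (\sum_j J i j * spin R (x j) + h i) - 2 * (\sum_j J i j * spin R (z j) + h i)
  = 2 * (\sum_j (J i j * spin R (x j) - J i j * spin R (z j))) by rewrite sumrB; ring.
have -> : \sum_j (J i j * spin R (x j) - J i j * spin R (z j)) =
          \sum_j (if j == k then J i k * (spin R (x k) - spin R (z k)) else 0).
  apply: eq_bigr => j _; case: (eqVneq j k) => [->|jk]; first by ring.
  by move: (ag j); rewrite jk /= => /eqP ->; rewrite subrr.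
rewrite sum_delta normrM normrM ger0_norm //.
have := spin_dist (x k) (z k); have := normr_ge0 (J i k).
set u := `|J i k|; set v := `|_ - _|; move=> u0 v2.
rewrite ler_pdivrMr //.
have -> : 2 * (u * v) = u * (2 * v) by ring.
have -> : u * 4 = u * (2 * 2) by ring.
by rewrite ler_wpM2l // ler_wpM2l.
Qed.
Lemma CS (b y : 'I_n -> R) : (forall k, 0 <= b k) ->
  (\sum_k b k * y k) ^+ 2 <= (\sum_k b k) * (\sum_k b k * y k ^+ 2).
Proof.
move=> b0.
have E1 : (\sum_k b k * y k) ^+ 2 = \sum_k \sum_l (b k * y k) * (b l * y l).
  by rewrite expr2 mulr_suml; apply: eq_bigr => k _; rewrite mulr_sumr.
have E2 : (\sum_k b k) * (\sum_k b k * y k ^+ 2) = \sum_k \sum_l b k * (b l * y l ^+ 2).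
  by rewrite mulr_suml; apply: eq_bigr => k _; rewrite mulr_sumr.
have E3 : (\sum_k b k) * (\sum_k b k * y k ^+ 2) = \sum_k \sum_l b l * (b k * y k ^+ 2).
  by rewrite E2 exchange_big.
rewrite -(@ler_pM2l _ 2) //.
set R1 := (\sum_k b k) * _.
have -> : 2 * R1 = \sum_k \sum_l b k * (b l * y l ^+ 2) + \sum_k \sum_l b l * (b k * y k ^+ 2).
  by rewrite -E2 -E3 /R1; ring.
rewrite E1 -big_split /= mulr_sumr; apply: ler_sum => k _.
rewrite mulr_sumr -big_split; apply: ler_sum => l _ /=.
rewrite -subr_ge0.
have -> : b k * (b l * y l ^+ 2) + b l * (b k * y k ^+ 2) - 2 * (b k * y k * (b l * y l))
  = b k * b l * (y k - y l) ^+ 2 by ring.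
by rewrite mulr_ge0 ?sqr_ge0 ?mulr_ge0.
Qed.

Lemma part1 J h : J^T = J -> (forall i, J i i = 0) ->
  opnorm22 (coupling_matrix J h) <= norm11 J.
Proof.
move=> HJ Jd.
have Js a b : J a b = J b a by rewrite -{1}HJ mxE.
have sqr_normr (t : R) : `|t| ^+ 2 = t ^+ 2 by rewrite real_normK ?num_real.
set A := coupling_matrix J h.
set M := norm11 J.
have M0 : 0 <= M by apply: bigmax_ge_id.
have row i : \sum_k `|J i k| <= M.
  rewrite /M /norm11. exact: le_bigmax.
have col k : \sum_i `|J i k| <= M.
  by rewrite (eq_bigr (fun i => `|J k i|)) ?row // => i _; rewrite Js.
have Ab i k := A_bound J h i k HJ Jd.
apply: ge_sup.
  by exists (l2 (A *m 0)), 0 => //=; rewrite /l2 big1 ?sqrtr0 // => i _; rewrite mxE expr0n.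
move=> _ [x /= x1 <-].
set S := \sum_k x k 0 ^+ 2.
have S0 : 0 <= S by apply: sumr_ge0 => k _; exact: sqr_ge0.
have S1 : S <= 1.
  by rewrite -(sqr_sqrtr S0) -[1](expr1n _ 2) ler_pXn2r ?nnegrE ?sqrtr_ge0.
rewrite /l2 -(ger0_norm M0) -sqrtr_sqr ler_wsqrtr //.
have step i : ((A *m x) i 0) ^+ 2 <= M * \sum_k `|J i k| * x k 0 ^+ 2.
  rewrite mxE.
  have h1 : `|\sum_k A i k * x k 0| <= \sum_k `|J i k| * `|x k 0|.
    apply: le_trans (ler_norm_sum _ _ _) _; apply: ler_sum => k _.
    rewrite normrM ler_wpM2r //; case/andP: (Ab i k) => a0 a1.
    by rewrite ger0_norm.
  apply: le_trans (_ : (\sum_k `|J i k| * `|x k 0|) ^+ 2 <= _).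
    by rewrite -sqr_normr ler_pXn2r ?nnegrE ?normr_ge0 // (le_trans _ h1).
  apply: le_trans (CS _ _ _) _ => //.
  rewrite [X in _ * X <= _](eq_bigr (fun k => `|J i k| * x k 0 ^+ 2)); last by move=> k _; rewrite sqr_normr.
  by rewrite ler_wpM2r // sumr_ge0 // => k _; rewrite mulr_ge0 ?sqr_ge0.
apply: le_trans (ler_sum _ (fun i _ => step i)) _.
rewrite -mulr_sumr expr2 ler_wpM2l // exchange_big /=.
under eq_bigr => k _ do rewrite -mulr_suml.
apply: le_trans (_ : \sum_k M * x k 0 ^+ 2 <= _).
  by apply: ler_sum => k _; rewrite ler_wpM2r ?sqr_ge0.
by rewrite -mulr_sumr -[X in _ <= X]mulr1 ler_wpM2l.
Qed.
Lemma sigN d : sig (- d) = 1 - sig d.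
Proof.
rewrite /sig expRN invrK.
have e0 := expR_gt0 d.
field; by rewrite !gt_eqF ?addr_gt0 ?invr_gt0.
Qed.

Lemma sig_ge K d : - K <= d -> (1 + expR K)^-1 <= sig d.
Proof.
move=> Kd; rewrite /sig -expRN.
rewrite lef_pV2 ?posrE ?addr_gt0 ?expR_gt0 //.
by rewrite lerD2l ler_expR lerNl.
Qed.

Lemma cond_bounds J h i x K : J^T = J -> J i i = 0 ->
  `|2 * (\sum_j J i j * spin R (x j) + h i)| <= K ->
  forall s, (1 + expR K)^-1 <= cond_law J h i x s <= 1 - (1 + expR K)^-1.
Proof.
move=> HJ Jii HK s.
have : - K <= 2 * (\sum_j J i j * spin R (x j) + h i) <= K by rewrite -ler_norml.
set D := 2 * _ => /andP [D1 D2].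
have L1 : (1 + expR K)^-1 <= sig D by apply: sig_ge.
have L2 : (1 + expR K)^-1 <= sig (- D) by apply: sig_ge; rewrite lerN2.
rewrite sigN in L2.
case: s; rewrite ?cond_false cond_true Ediff // -/D.
  by rewrite L1 /= lerBrDl -lerBrDr.
by rewrite L2 /= lerD2l lerN2.
Qed.

Lemma D_bound J h i x alpha' : norm11 J <= 1 -> normInf h <= alpha' ->
  `|2 * (\sum_j J i j * spin R (x j) + h i)| <= 2 * (1 + alpha').
Proof.
move=> HJ Hh.
rewrite normrM ger0_norm // ler_wpM2l //.
apply: le_trans (ler_normD _ _) _; apply: lerD.
  apply: le_trans (ler_norm_sum _ _ _) _.
  apply: le_trans HJ.
  apply: le_trans (_ : \sum_j `|J i j| <= _); last first.
    by rewrite /norm11; exact: (le_bigmax _ (fun i => \sum_j `|J i j|)).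
  apply: ler_sum => j _; rewrite normrM.
  have -> : `|spin R (x j)| = 1 by rewrite /spin; case: (x j); rewrite ?normrN normr1.
  by rewrite mulr1.
apply: le_trans Hh; rewrite /normInf; exact: (le_bigmax _ (fun i => `|h i|)).
Qed.
End Aux.

Theorem lemma3p1 (R : realType) (alpha : R) (Halpha : 0 < alpha <= 1) :
  (forall (n : nat) (J : 'M[R]_n) (h : 'I_n -> R),
      J^T = J -> (forall i, J i i = 0) -> norm11 J <= 1 - alpha ->
      opnorm22 (coupling_matrix J h) <= norm11 J /\ norm11 J <= 1 - alpha)
  /\
  (forall alpha' : R, 0 <= alpha' ->
    exists c C : R, 0 < c /\ 0 < C /\
      forall (n : nat) (J : 'M[R]_n) (h : 'I_n -> R),
        J^T = J -> (forall i, J i i = 0) -> norm11 J <= 1 - alpha ->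
        normInf h <= alpha' ->
        forall (i : 'I_n) (x : config n) (s : bool),
          c < cond_law J h i x s < 1 - C).
Proof.
case/andP: Halpha => a0 a1.
split.
  by move=> n J h HJ Jd HN; split => //; apply: (@part1 R n J h).
move=> alpha' al0.
set K := 2 * (1 + alpha').
set q := (1 + expR K)^-1.
have q0 : 0 < q by rewrite invr_gt0 addr_gt0 ?expR_gt0.
exists (q / 2), (q / 2); split; first by rewrite divr_gt0.
split; first by rewrite divr_gt0.
move=> n J h HJ Jd HN Hh i x s.
have HN1 : norm11 J <= 1 by apply: le_trans HN _; rewrite lerBlDr lerDl ltW.
have := @cond_bounds R n J h i x K HJ (Jd i) (@D_bound R n J h i x alpha' HN1 Hh) s.
case/andP => b1 b2.
apply/andP; split.
  by apply: lt_le_trans b1; rewrite ltr_pdivrMr // ltr_pMr // ltr1n.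
by apply: le_lt_trans b2 _; rewrite ltrD2l ltrN2 ltr_pdivrMr // ltr_pMr // ltr1n.
Qed.
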